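(* Let $G$ be a finite group, and let $K$ be a proper normal subgroup of $G$ such that $G/K$ is nilpotent. If $\chi_1,\chi_2\in\mathrm{Irr}(G)$ are such that neither $(\chi_1)_K$ nor $(\chi_2)_K$ is irreducible, then there exists $g\in G$ with $\chi_1(g)=0=\chi_2(g)$.
   Context: $\mathrm{Irr}(G)$ denotes the set of irreducible complex characters of $G$; $\chi_K$ denotes the restriction of $\chi$ to $K$. *)

(* Defs.v *)
From mathcomp Require Import all_boot all_order all_algebra all_fingroup all_solvable all_field all_character.

(* Main.v *)
Set Warnings "-notation-overridden,-ambiguous-paths".
Require Import Defs.
From mathcomp Require Import all_boot all_order all_algebra all_fingroup all_solvable all_field all_character.
From mathcomp Require Import zify.
Set Implicit Arguments.
Unset Strict Implicit.
Unset Printing Implicit Defensive.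
Import GroupScope GRing.Theory Num.Theory.
Local Open Scope ring_scope.

Section Helpers.
Variable gT : finGroupType.
Implicit Types G K T L M : {group gT}.
Local Open Scope group_scope.

Lemma nilq_normal_over G K T :
  K <| G -> nilpotent (G / K) -> K \subset T -> T \proper G ->
  exists M : {group gT}, [/\ M <| G, T \subset M & M \proper G].
Proof.
move=> nKG nilQ sKT prTG.
have sTG := proper_sub prTG.
have nKT : K <| T by exact: normalS sKT sTG nKG.
have prQ : T / K \proper G / K by rewrite quotient_proper.
have [Mb maxMb sTMb] := @maxgroup_exists _ (fun X : {group coset_of K} => X \proper G / K) _ prQ.
have [prMb maxP] := maxgroupP maxMb.
have nMb : Mb <| G / K.
  rewrite /normal (proper_sub prMb) /=.
  have := nilpotent_proper_norm nilQ prMb => prN.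
  apply/negPn/negP => nN.
  have prNQ : 'N_(G / K)(Mb) \proper G / K.
    rewrite properEneq subsetIl andbT; apply: contra nN => /eqP <-.
    exact: subsetIr.
  have := maxP [group of 'N_(G / K)(Mb)] prNQ.
  rewrite subsetI (proper_sub prMb) normG => /(_ isT) eqN.
  by move: prN; rewrite /= eqN properxx.
exists (coset K @*^-1 Mb)%G; split.
- by rewrite -(quotientGK nKG) cosetpre_normal.
- rewrite -sub_quotient_pre //; exact: subset_trans sTG (normal_norm nKG).
- by rewrite -{1}(quotientGK nKG) cosetpre_proper.
Qed.

Lemma nilq_prime_step G K :
  K <| G -> nilpotent (G / K) -> K \proper G ->
  exists L : {group gT}, [/\ L <| G, K \subset L & prime #|L : K|].
Proof.
move=> nKG nilQ prKG.
have Qn1 : G / K != 1 by rewrite quotient_neq1.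
have Zn1 : 'Z(G / K) != 1 by rewrite center_nil_eq1.
have p_pr : prime (pdiv #|'Z(G / K)|).
  by apply: pdiv_prime; rewrite cardG_gt1.
have [x Zx ox] := Cauchy p_pr (pdiv_dvd _).
have nX : <[x]> <| G / K by apply: sub_center_normal; rewrite cycle_subG.
exists (coset K @*^-1 <[x]>)%G; split.
- by rewrite -(quotientGK nKG) cosetpre_normal.
- exact: sub_cosetpre.
rewrite -card_quotient; last first.
  rewrite (subset_trans _ (normal_norm nKG)) // sub_cosetpre_quo //.
  exact: normal_sub nX.
by rewrite cosetpreK -orderE ox.
Qed.

Lemma nilq_quo G K L :
  K <| G -> L <| G -> K \subset L -> nilpotent (G / K) -> nilpotent (G / L).
Proof.
move=> nKG nLG sKL nilQ.
rewrite -(isog_nil (third_isog sKL nKG nLG)).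
exact: quotient_nil.
Qed.


Lemma Ind_vanish G M T (psi : 'CF(T)) g :
  M <| G -> T \subset M -> g \in G -> g \notin M -> ('Ind[G] psi)%R g = 0%R.
Proof.
move=> nMG sTM Gg nMg.
rewrite -(cfIndInd _ (normal_sub nMG) sTM).
by apply: cfun_on0 nMg; apply: cfInd_normal.
Qed.

Lemma vanish_main n G K (i : Iirr G) :
  (#|G| - #|K| < n)%N ->
  K <| G -> nilpotent (G / K) -> ('Res[K] 'chi_i)%R \notin irr K ->
  exists M : {group gT}, [/\ M <| G, M \proper G &
     forall g, g \in G -> g \notin M -> ('chi_i)%R g = 0%R].
Proof.
elim: n K => [|n IH] K //= ltn nKG nilQ resK.
have sKG := normal_sub nKG.
have prKG : K \proper G.
  rewrite properEneq sKG andbT; apply: contra resK => /eqP ->.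
  by rewrite cfRes_id mem_irr.
have [t tK] := constt_cfRes_irr K i.
have [prT | ] := boolP ('I_G[('chi_t)%R] \proper G).
  have [calAB _ calBim _ _] := constt_Inertia_bijection t nKG.
  have : i \in irr_constt ('Ind[G] ('chi_t)%R)%R by rewrite constt_Ind_Res.
  rewrite -calBim => /imsetP[s sA ->].
  have [M [nMG sTM prMG]] := nilq_normal_over nKG nilQ (sub_Inertia _ sKG) prT.
  exists M; split=> // g Gg nMg.
  rewrite cfIirrE ?calAB //.
  exact: Ind_vanish nMG sTM Gg nMg.
rewrite properEneq Inertia_sub andbT negbK => /eqP IG.
have [L [nLG sKL pL]] := nilq_prime_step nKG nilQ prKG.
have sLG := normal_sub nLG.
have [resL | nresL] := boolP (('Res[L] ('chi_i)%R)%R \in irr L); last first.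
  have ltKL : (#|K| < #|L|)%N.
    rewrite -(Lagrange sKL) -{1}(muln1 #|K|) ltn_mul2l cardG_gt0 /=.
    exact: prime_gt1.
  have leLG : (#|L| <= #|G|)%N by apply: subset_leq_card.
  have := IH L _ nLG (nilq_quo nKG nLG sKL nilQ) nresL.
  apply; move: ltn ltKL leLG; clear; move: #|G| #|K| #|L| => a b d; lia.
case/irrP: resL => j Dj.
have nKL : K <| L := normalS sKL sLG nKG.
have [resKj | [c injc DtNc]] := cfRes_prime_irr_cases j nKL (erefl _) pL.
  by move: resKj; rewrite -Dj cfResRes // (negPf resK).
rewrite -Dj cfResRes // in DtNc.
have DK := Clifford_Res_sum_cfclass nKG tK.
rewrite cfclass_invariant ?big_seq1 in DK; last by rewrite -IG subsetIr.
have nz_e : ('['Res[K] ('chi_i)%R, ('chi_t)%R])%R != 0%R by rewrite -irr_consttE.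
have [k s'ck]: exists k, c k != t.
  pose i0 := Ordinal (prime_gt0 pL); pose i1 := Ordinal (prime_gt1 pL).
  have [<- | ] := eqVneq (c i0) t; last by exists i0.
  by exists i1; rewrite (inj_eq injc).
have /esym/eqP/idPn[] := congr1 (cfdotr ('chi_(c k))%R) DtNc; rewrite {1}DK /=.
rewrite cfdotZl cfdot_irr mulrb ifN_eqC // mulr0.
rewrite cfdot_suml (bigD1 k) //= cfnorm_irr big1 ?addr0 ?oner_eq0 // => l k'l.
by rewrite cfdot_irr mulrb ifN_eq ?(inj_eq injc).
Qed.

End Helpers.

Theorem lemma3p2 (gT : finGroupType) (G K : {group gT})
  (nKG : K <| G) (properKG : K \proper G) (nilGK : nilpotent (G / K))
  (i1 i2 : Iirr G) :
  'Res[K] 'chi_i1 \notin irr K ->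
  'Res[K] 'chi_i2 \notin irr K ->
  exists2 g, g \in G & ('chi_i1 g = 0 /\ 'chi_i2 g = 0).
Proof.
move=> r1 r2.
have [M1 [nM1 pM1 v1]] := vanish_main (ltnSn _) nKG nilGK r1.
have [M2 [nM2 pM2 v2]] := vanish_main (ltnSn _) nKG nilGK r2.
suff [g Gg [g1 g2]] : exists2 g, g \in G & (g \notin M1 /\ g \notin M2).
  by exists g => //; split; [apply: v1 | apply: v2].
have [s12 | ] := boolP (M1 \subset M2).
  have [_ [g Gg ng]] := properP pM2.
  by exists g => //; split => //; apply: contra ng; apply: (subsetP s12).
case/subsetPn => a a1 a2.
have [s21 | ] := boolP (M2 \subset M1).
  have [_ [g Gg ng]] := properP pM1.
  by exists g => //; split => //; apply: contra ng; apply: (subsetP s21).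
case/subsetPn => b b2 b1.
have sM1 := subsetP (normal_sub nM1); have sM2 := subsetP (normal_sub nM2).
exists (a * b)%g; first by apply: groupM; [exact: sM1 | exact: sM2].
by rewrite (groupMl _ a1) (groupMr _ b2).
Qed.
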